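(* Let $\mathcal{H}$ be a Hilbert space and let $\{\psi_k\}_{k\in\mathbb{Z}^d}$ be a Bessel sequence in $\mathcal{H}$ that is complete (its linear span is dense in $\mathcal{H}$). Let $n_0\in\mathbb{Z}^d$. Then $\{\psi_k+\psi_{k+n_0}\}_{k\in\mathbb{Z}^d}$ is complete in $\mathcal{H}$.
   Context: A sequence $\{\psi_k\}$ is Bessel if there is $B>0$ with $\sum_k|\langle h,\psi_k\rangle|^2\le B\|h\|^2$ for all $h\in\mathcal{H}$. *)

(* Defs.v *)
From Stdlib Require Import Reals List ZArith.
From Stdlib Require Fin.
Import ListNotations.
Open Scope R_scope.

(** Complex numbers as pairs (real part, imaginary part). *)
Definition C : Type := (R * R)%type.
Definition C0 : C := (0, 0).
Definition C1 : C := (1, 0).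
Definition Cadd (a b : C) : C := (fst a + fst b, snd a + snd b).
Definition Cmul (a b : C) : C :=
  (fst a * fst b - snd a * snd b, fst a * snd b + snd a * fst b).
Definition Cconj (a : C) : C := (fst a, - snd a).
Definition Cmod2 (a : C) : R := fst a * fst a + snd a * snd a.

Record HilbertSpace := {
  hs_car :> Type;
  hs_zero : hs_car;
  hs_add : hs_car -> hs_car -> hs_car;
  hs_opp : hs_car -> hs_car;
  hs_scal : C -> hs_car -> hs_car;
  hs_inner : hs_car -> hs_car -> C;
  hs_add_assoc : forall x y z, hs_add x (hs_add y z) = hs_add (hs_add x y) z;
  hs_add_comm : forall x y, hs_add x y = hs_add y x;
  hs_add_0 : forall x, hs_add x hs_zero = x;
  hs_add_opp : forall x, hs_add x (hs_opp x) = hs_zero;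
  hs_scal_assoc : forall a b x, hs_scal a (hs_scal b x) = hs_scal (Cmul a b) x;
  hs_scal_1 : forall x, hs_scal C1 x = x;
  hs_scal_distr_v : forall a x y, hs_scal a (hs_add x y) = hs_add (hs_scal a x) (hs_scal a y);
  hs_scal_distr_s : forall a b x, hs_scal (Cadd a b) x = hs_add (hs_scal a x) (hs_scal b x);
  hs_inner_add_l : forall x y z, hs_inner (hs_add x y) z = Cadd (hs_inner x z) (hs_inner y z);
  hs_inner_scal_l : forall a x y, hs_inner (hs_scal a x) y = Cmul a (hs_inner x y);
  hs_inner_conj : forall x y, hs_inner y x = Cconj (hs_inner x y);
  hs_inner_pos : forall x, 0 <= fst (hs_inner x x);
  hs_inner_def : forall x, hs_inner x x = C0 -> x = hs_zero;
  hs_complete : forall u : nat -> hs_car,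
    (forall eps, 0 < eps -> exists N, forall m n, (N <= m)%nat -> (N <= n)%nat ->
        sqrt (fst (hs_inner (hs_add (u m) (hs_opp (u n))) (hs_add (u m) (hs_opp (u n))))) < eps) ->
    exists l, forall eps, 0 < eps -> exists N, forall n, (N <= n)%nat ->
        sqrt (fst (hs_inner (hs_add (u n) (hs_opp l)) (hs_add (u n) (hs_opp l)))) < eps
}.

Arguments hs_zero {_}.
Arguments hs_add {_}.
Arguments hs_opp {_}.
Arguments hs_scal {_}.
Arguments hs_inner {_}.

Definition hs_norm {H : HilbertSpace} (x : H) : R := sqrt (fst (hs_inner x x)).
Definition hs_sub {H : HilbertSpace} (x y : H) : H := hs_add x (hs_opp y).

Definition lincomb {H : HilbertSpace} {I : Type} (psi : I -> H) (L : list (C * I)) : H :=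
  fold_right (fun ck acc => hs_add (hs_scal (fst ck) (psi (snd ck))) acc) hs_zero L.

Definition sumR (l : list R) : R := fold_right Rplus 0 l.

(** Bessel: there is B > 0 with sum_k |<h,psi_k>|^2 <= B ||h||^2 for all h
    (the sum of nonnegative terms over I bounded via all finite subsets). *)
Definition Bessel {H : HilbertSpace} {I : Type} (psi : I -> H) : Prop :=
  exists B : R, 0 < B /\
    forall (h : H) (F : list I), NoDup F ->
      sumR (map (fun k => Cmod2 (hs_inner h (psi k))) F) <= B * (hs_norm h) ^ 2.

Definition complete_seq {H : HilbertSpace} {I : Type} (psi : I -> H) : Prop :=
  forall (h : H) (eps : R), 0 < eps ->
    exists L : list (C * I), hs_norm (hs_sub h (lincomb psi L)) < eps.

Definition Zd (d : nat) : Type := Fin.t d -> Z.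
Definition zd_add {d : nat} (k n : Zd d) : Zd d := fun i => (k i + n i)%Z.

(* Main.v *)
Require Import Defs.
From Stdlib Require Import Reals List ZArith Lra Lia Classical FunctionalExtensionality FinFun.
Import ListNotations.
Open Scope R_scope.

Section HS.
Variable H : HilbertSpace.
Implicit Types x y z : H.

Lemma pair_eq (p q : Defs.C) : fst p = fst q -> snd p = snd q -> p = q.
Proof. destruct p, q; simpl; intros; subst; auto. Qed.

Lemma inner_zero_l (z : H) : hs_inner hs_zero z = C0.
Proof.
  pose proof (hs_inner_add_l H hs_zero hs_zero z) as E.
  rewrite hs_add_0 in E. destruct (hs_inner hs_zero z) as [a b].
  unfold Cadd in E; simpl in E. injection E; intros. unfold C0; f_equal; lra.
Qed.

Lemma inner_opp_l (x z : H) :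
  hs_inner (hs_opp x) z = (- fst (hs_inner x z), - snd (hs_inner x z)).
Proof.
  pose proof (hs_inner_add_l H x (hs_opp x) z) as E.
  rewrite hs_add_opp, inner_zero_l in E.
  destruct (hs_inner x z) as [a b]; destruct (hs_inner (hs_opp x) z) as [c d].
  unfold Cadd, C0 in E; simpl in E. injection E; intros. simpl; f_equal; lra.
Qed.

Lemma hs_ext (x y : H) : (forall z, hs_inner x z = hs_inner y z) -> x = y.
Proof.
  intro E.
  assert (W : forall z, hs_inner (hs_add x (hs_opp y)) z = C0).
  { intro z. rewrite hs_inner_add_l, E, <- hs_inner_add_l, hs_add_opp.
    apply inner_zero_l. }
  apply hs_inner_def in W.
  rewrite <- (hs_add_0 H x), <- (hs_add_opp H y), (hs_add_comm H y),
    hs_add_assoc, W, hs_add_comm, hs_add_0. reflexivity.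
Qed.

Ltac hexp := repeat (rewrite hs_inner_add_l || rewrite hs_inner_scal_l
   || rewrite inner_opp_l || rewrite inner_zero_l).
Ltac hsolve := apply hs_ext; intro; unfold hs_sub; hexp; apply pair_eq;
   unfold Cadd, Cmul, C0, C1; simpl; ring.

Definition Q (x y : H) := fst (@hs_inner H x y).

Lemma Q_sym x y : Q x y = Q y x.
Proof. unfold Q. rewrite (hs_inner_conj H x y). reflexivity. Qed.

Lemma snd_self x : snd (hs_inner x x) = 0.
Proof. pose proof (hs_inner_conj H x x) as E.
  destruct (hs_inner x x) as [a b]. unfold Cconj in E; simpl in *.
  injection E; lra. Qed.

Lemma Q_pos x : 0 <= Q x x.
Proof. apply hs_inner_pos. Qed.

Lemma norm_Q x : hs_norm x = sqrt (Q x x).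
Proof. reflexivity. Qed.

Lemma Q_add_l x y z : Q (hs_add x y) z = Q x z + Q y z.
Proof. unfold Q. rewrite hs_inner_add_l. reflexivity. Qed.

Lemma Q_add_r x y z : Q z (hs_add x y) = Q z x + Q z y.
Proof. rewrite !(Q_sym z). apply Q_add_l. Qed.

Lemma Q_rscal_l r x z : Q (hs_scal (r,0) x) z = r * Q x z.
Proof. unfold Q. rewrite hs_inner_scal_l. unfold Cmul; simpl. ring. Qed.

Lemma Q_rscal_r r x z : Q z (hs_scal (r,0) x) = r * Q z x.
Proof. rewrite !(Q_sym z). apply Q_rscal_l. Qed.

Lemma Q_scal_self c x : Q (hs_scal c x) (hs_scal c x) = Cmod2 c * Q x x.
Proof.
  unfold Q. rewrite hs_inner_scal_l, hs_inner_conj, hs_inner_scal_l.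
  pose proof (snd_self x) as S0.
  destruct c as [a b]. destruct (hs_inner x x) as [p q]. simpl in *. subst.
  unfold Cmod2. simpl. ring.
Qed.

Lemma CS x y : Q x y ^ 2 <= Q x x * Q y y.
Proof.
  assert (T : forall t, 0 <= Q x x + 2*t*Q x y + t*t*Q y y).
  { intro t. pose proof (Q_pos (hs_add x (hs_scal (t,0) y))) as P.
    rewrite Q_add_l, !Q_add_r, !Q_rscal_l, !Q_rscal_r, (Q_sym y x) in P. lra. }
  pose proof (Q_pos y) as Py.
  set (a := Q x x) in *; set (b := Q x y) in *; set (c := Q y y) in *.
  destruct (Rle_lt_or_eq_dec 0 c Py) as [Hc|Hc].
  - specialize (T (-b/c)).
    replace (a + 2 * (- b / c) * b + - b / c * (- b / c) * c) with (a - b*b/c) in T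
      by (field; lra).
    assert (b*b/c*c <= a * c) by (apply Rmult_le_compat_r; lra).
    replace (b*b/c*c) with (b*b) in H0 by (field; lra). nra.
  - rewrite <- Hc in *.
    destruct (Req_dec b 0) as [Hb|Hb].
    + subst. rewrite Hb. nra.
    + specialize (T (-(a+1)/(2*b))).
      replace (a + 2 * (- (a + 1) / (2 * b)) * b + - (a + 1) / (2 * b) * (- (a + 1) / (2 * b)) * 0)
        with (-1) in T by (field; auto). lra.
Qed.

Lemma norm_triangle x y : hs_norm (hs_add x y) <= hs_norm x + hs_norm y.
Proof.
  rewrite !norm_Q, Q_add_l, !Q_add_r, (Q_sym y x).
  pose proof (CS x y) as Hcs. pose proof (Q_pos x) as Px. pose proof (Q_pos y) as Py.
  pose proof (sqrt_pos (Q x x)) as Sa. pose proof (sqrt_pos (Q y y)) as Sb.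
  pose proof (pow2_sqrt (Q x x) Px) as Ea. pose proof (pow2_sqrt (Q y y) Py) as Eb.
  set (a := sqrt (Q x x)) in *. set (b := sqrt (Q y y)) in *.
  assert (Q x y <= a * b).
  { rewrite <- Ea, <- Eb in Hcs. set (q := Q x y) in *.
    destruct (Rle_dec q (a*b)) as [|Hn]; auto.
    assert (0 <= a*b) by nra.
    assert ((q - a*b)*(q+a*b) > 0) by (apply Rmult_lt_0_compat; lra). nra. }
  rewrite <- (sqrt_square (a+b)) by lra. apply sqrt_le_1_alt. nra.
Qed.

Lemma norm_scal c x : hs_norm (hs_scal c x) = sqrt (Cmod2 c) * hs_norm x.
Proof.
  rewrite !norm_Q, Q_scal_self, sqrt_mult_alt; auto.
  destruct c; unfold Cmod2; simpl; nra.
Qed.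

Lemma norm_zero : hs_norm (@hs_zero H) = 0.
Proof. rewrite norm_Q. unfold Q. rewrite inner_zero_l. simpl. apply sqrt_0. Qed.

Lemma norm_pos x : 0 <= hs_norm x.
Proof. apply sqrt_pos. Qed.

End HS.

Ltac hexp := repeat (rewrite hs_inner_add_l || rewrite hs_inner_scal_l
   || rewrite inner_opp_l || rewrite inner_zero_l).
Ltac hsolve := apply hs_ext; intro; unfold hs_sub; hexp; apply pair_eq;
   unfold Cadd, Cmul, Defs.C0, Defs.C1; simpl; ring.

Section Span.
Variable H : HilbertSpace.
Variable I : Type.
Variable phi : I -> H.

Definition inS (y : H) := forall eps, 0 < eps ->
  exists L, hs_norm (hs_sub y (lincomb phi L)) < eps.

Lemma inS_exact L : inS (lincomb phi L).
Proof.
  intros eps He. exists L.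
  replace (hs_sub (lincomb phi L) (lincomb phi L)) with (@hs_zero H) by hsolve.
  rewrite norm_zero. lra.
Qed.

Lemma lincomb_app L1 L2 :
  lincomb phi (L1 ++ L2) = hs_add (lincomb phi L1) (lincomb phi L2).
Proof.
  induction L1 as [|[c k] L1 IH]; simpl.
  - hsolve.
  - rewrite IH. hsolve.
Qed.

Lemma lincomb_scal c L :
  lincomb phi (map (fun p => (Cmul c (fst p), snd p)) L) = hs_scal c (lincomb phi L).
Proof.
  induction L as [|[a k] L IH]; simpl.
  - hsolve.
  - rewrite IH. hsolve.
Qed.

Lemma inS_add y1 y2 : inS y1 -> inS y2 -> inS (hs_add y1 y2).
Proof.
  intros H1 H2 eps He.
  destruct (H1 (eps/2)) as [L1 E1]; [lra|].
  destruct (H2 (eps/2)) as [L2 E2]; [lra|].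
  exists (L1 ++ L2). rewrite lincomb_app.
  replace (hs_sub (hs_add y1 y2) (hs_add (lincomb phi L1) (lincomb phi L2)))
    with (hs_add (hs_sub y1 (lincomb phi L1)) (hs_sub y2 (lincomb phi L2))) by hsolve.
  eapply Rle_lt_trans; [apply norm_triangle|]. lra.
Qed.

Lemma inS_scal c y : inS y -> inS (hs_scal c y).
Proof.
  intros H1 eps He.
  set (m := sqrt (Cmod2 c)).
  assert (Hm : 0 <= m) by apply sqrt_pos.
  destruct (H1 (eps / (m+1))) as [L E]; [apply Rdiv_lt_0_compat; lra|].
  exists (map (fun p => (Cmul c (fst p), snd p)) L). rewrite lincomb_scal.
  replace (hs_sub (hs_scal c y) (hs_scal c (lincomb phi L)))
    with (hs_scal c (hs_sub y (lincomb phi L))) by hsolve.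
  rewrite norm_scal. fold m.
  pose proof (norm_pos _ (hs_sub y (lincomb phi L))).
  apply Rle_lt_trans with (m * (eps/(m+1))).
  - apply Rmult_le_compat_l; lra.
  - apply Rlt_le_trans with ((m+1) * (eps/(m+1))).
    + apply Rmult_lt_compat_r; [apply Rdiv_lt_0_compat|]; lra.
    + right. field. lra.
Qed.

Lemma inS_lim y : (forall eps, 0 < eps -> exists z, inS z /\ hs_norm (hs_sub y z) < eps) -> inS y.
Proof.
  intros Hl eps He.
  destruct (Hl (eps/2)) as [z [Hz E1]]; [lra|].
  destruct (Hz (eps/2)) as [L E2]; [lra|].
  exists L.
  replace (hs_sub y (lincomb phi L))
    with (hs_add (hs_sub y z) (hs_sub z (lincomb phi L))) by hsolve.
  eapply Rle_lt_trans; [apply norm_triangle|]. lra.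
Qed.

End Span.

Lemma sumR_app l1 l2 : sumR (l1 ++ l2) = sumR l1 + sumR l2.
Proof. induction l1; simpl; [ring| rewrite IHl1; ring]. Qed.

Lemma sumR_bound {A : Type} (f g : A -> R) (a b : R) (l : list A) :
  (forall x, f x <= a * g x + b) ->
  sumR (map f l) <= a * sumR (map g l) + b * INR (length l).
Proof.
  intro Hf. induction l as [|x l IH].
  - simpl. lra.
  - change (f x + sumR (map f l) <= a * (g x + sumR (map g l)) + b * INR (S (length l))).
    rewrite S_INR. specialize (Hf x). lra.
Qed.

Lemma sign_sq (P : nat) : (-1)^P * (-1)^P = 1.
Proof. rewrite <- Rpow_mult_distr. replace (-1 * -1) with 1 by ring. apply pow1. Qed.

Section Bess.
Variable H : HilbertSpace.
Variable f : nat -> H.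

Fixpoint G (N : nat) : H :=
  match N with
  | O => hs_zero
  | S N' => hs_add (G N') (hs_scal ((-1)^(S N'), 0) (f (S N')))
  end.

Lemma Q_G N z : Q H (G N) z = sumR (map (fun P => (-1)^P * Q H (f P) z) (seq 1 N)).
Proof.
  induction N as [|N IH].
  - simpl. unfold Q. rewrite inner_zero_l. reflexivity.
  - rewrite seq_S, map_app, sumR_app, <- IH. simpl G. rewrite Q_add_l, Q_rscal_l.
    simpl. replace (S N) with (1 + N)%nat by lia. ring.
Qed.

Lemma G_bound B N : 0 < B ->
  (forall h, sumR (map (fun P => Cmod2 (hs_inner h (f P))) (seq 1 N)) <= B * hs_norm h ^ 2) ->
  Q H (G N) (G N) <= B * INR N.
Proof.
  intros HB Hb.
  set (g := G N).
  pose proof (Q_G N g) as E. fold g in E.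
  assert (Pt : forall P, (-1)^P * Q H (f P) g <= (/(2*B)) * Cmod2 (hs_inner g (f P)) + B/2).
  { intro P. rewrite Q_sym. unfold Q, Cmod2.
    destruct (hs_inner g (f P)) as [p q]. simpl.
    pose proof (sign_sq P) as Ss. set (s := (-1)^P) in *.
    assert (2*B*(s*p) <= p*p + q*q + B*B).
    { assert (A1 : 0 <= (p - B*s)*(p-B*s)) by apply Rle_0_sqr. assert (0 <= q*q) by apply Rle_0_sqr.
      replace ((p - B*s)*(p-B*s)) with (p*p - 2*B*(s*p) + B*B*(s*s)) in A1 by ring. rewrite Ss in A1. lra. }
    apply Rmult_le_reg_l with (2*B); [lra|].
    replace (2 * B * (/ (2 * B) * (p * p + q * q) + B / 2)) with (p*p+q*q+B*B) by (field; lra).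
    lra. }
  pose proof (sumR_bound _ _ _ _ (seq 1 N) Pt) as Sb.
  rewrite <- E, length_seq in Sb.
  specialize (Hb g). rewrite norm_Q, pow2_sqrt in Hb by apply Q_pos.
  assert (/(2*B) * sumR (map (fun P => Cmod2 (hs_inner g (f P))) (seq 1 N))
          <= /(2*B) * (B * Q H g g)).
  { apply Rmult_le_compat_l; [left; apply Rinv_0_lt_compat; lra | exact Hb]. }
  replace (/(2*B) * (B * Q H g g)) with (Q H g g / 2) in H0 by (field; lra).
  lra.
Qed.

End Bess.

Ltac hsolvef := apply hs_ext; intro; unfold hs_sub; hexp; apply pair_eq;
   unfold Cadd, Cmul, Defs.C0, Defs.C1; simpl; field.

Section Main.
Variable H : HilbertSpace.
Variable d : nat.
Variable psi : Zd d -> H.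
Variable n0 : Zd d.

Definition phi (k : Zd d) : H := hs_add (psi k) (psi (zd_add k n0)).

Lemma phi_inS k : inS H _ phi (phi k).
Proof.
  replace (phi k) with (lincomb phi [(Defs.C1, k)]) by (simpl; hsolve).
  apply inS_exact.
Qed.

Fixpoint kk (k : Zd d) (P : nat) : Zd d :=
  match P with O => k | S P' => zd_add (kk k P') n0 end.

Lemma kk_val k P i : kk k P i = (k i + Z.of_nat P * n0 i)%Z.
Proof.
  induction P as [|P IH].
  - simpl. lia.
  - change (kk k (S P) i) with (zd_add (kk k P) n0 i).
    unfold zd_add. rewrite IH, Nat2Z.inj_succ, Z.mul_succ_l. lia.
Qed.

Definition ee k P : H := hs_scal ((-1)^P, 0) (psi (kk k P)).

Lemma stepA k P : inS H _ phi (hs_sub (psi k) (ee k P)).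
Proof.
  induction P as [|P IH].
  - replace (hs_sub (psi k) (ee k 0)) with (lincomb phi []) by (unfold ee; simpl; hsolve).
    apply inS_exact.
  - replace (hs_sub (psi k) (ee k (S P)))
      with (hs_add (hs_sub (psi k) (ee k P)) (hs_scal ((-1)^P,0) (phi (kk k P)))).
    + apply inS_add; auto. apply inS_scal. apply phi_inS.
    + unfold ee, phi. simpl kk. hsolve.
Qed.

Definition X k N : H :=
  hs_add (hs_scal (INR N, 0) (psi k)) (hs_opp (G H (fun P => psi (kk k P)) N)).

Lemma stepB k N : inS H _ phi (X k N).
Proof.
  induction N as [|N IH].
  - replace (X k 0) with (lincomb phi []) by (unfold X; simpl; hsolve).
    apply inS_exact.
  - replace (X k (S N)) with (hs_add (X k N) (hs_sub (psi k) (ee k (S N)))).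
    + apply inS_add; auto. apply stepA.
    + unfold X, ee. rewrite S_INR. simpl G. hsolve.
Qed.

Lemma psi_inS (B : R) k : 0 < B ->
  (forall (h : H) (F : list (Zd d)), NoDup F ->
      sumR (map (fun k => Cmod2 (hs_inner h (psi k))) F) <= B * (hs_norm h) ^ 2) ->
  inS H _ phi (psi k).
Proof.
  intros HB Hb.
  destruct (classic (exists i, n0 i <> 0%Z)) as [[i Hi]|Hn].
  - apply inS_lim. intros eps He.
    set (x := B / (eps*eps)).
    assert (Hx : 0 < x) by (unfold x; apply Rdiv_lt_0_compat; nra).
    destruct (archimed x) as [A1 _].
    set (N := Z.to_nat (up x)).
    assert (HN : INR N = IZR (up x)).
    { unfold N. rewrite INR_IZR_INZ, Z2Nat.id; auto.
      apply le_IZR. lra. }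
    assert (HNp : 0 < INR N) by lra.
    set (f := fun P => psi (kk k P)).
    exists (hs_scal (/ INR N, 0) (X k N)). split.
    + apply inS_scal. apply stepB.
    + replace (hs_sub (psi k) (hs_scal (/ INR N, 0) (X k N)))
        with (hs_scal (/ INR N, 0) (G H f N)) by (unfold X, f; hsolvef; lra).
      assert (Gb : Q H (G H f N) (G H f N) <= B * INR N).
      { apply G_bound; auto. intro h.
        specialize (Hb h (map (kk k) (seq 1 N))).
        rewrite map_map in Hb. apply Hb.
        apply Injective_map_NoDup; [|apply seq_NoDup].
        intros P P' E. apply (f_equal (fun g => g i)) in E.
        rewrite !kk_val in E.
        assert (Z.of_nat P * n0 i = Z.of_nat P' * n0 i)%Z by lia.
        apply Z.mul_cancel_r in H0; auto. lia. }
      rewrite norm_Q, Q_scal_self. unfold Cmod2; simpl.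
      rewrite <- (sqrt_square eps) by lra. apply sqrt_lt_1_alt. split.
      * apply Rmult_le_pos; [nra| apply Q_pos].
      * apply Rle_lt_trans with ((/INR N * /INR N + 0*0) * (B * INR N)).
        -- apply Rmult_le_compat_l; [nra|auto].
        -- replace ((/INR N * /INR N + 0*0) * (B * INR N)) with (B / INR N) by (field; lra).
           apply Rmult_lt_reg_r with (INR N); auto.
           replace (B / INR N * INR N) with B by (field; lra).
           assert (x * (eps*eps) = B) by (unfold x; field; lra).
           nra.
  - assert (Ez : zd_add k n0 = k).
    { unfold zd_add. apply functional_extensionality. intro i.
      destruct (Z.eq_dec (n0 i) 0) as [e|e]; [lia|]. exfalso; apply Hn; eauto. }
    replace (psi k) with (hs_scal (/2, 0) (phi k)).
    + apply inS_scal, phi_inS.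
    + unfold phi. rewrite Ez. hsolvef.
Qed.

End Main.

Theorem mainTheorem13 (H : HilbertSpace) (d : nat) (hd : (1 <= d)%nat)
  (psi : Zd d -> H) (n0 : Zd d) :
  Bessel psi -> complete_seq psi ->
  complete_seq (fun k : Zd d => hs_add (psi k) (psi (zd_add k n0))).
Proof.
  intros [B [HB Hb]] Hc h eps He.
  assert (Hh : inS H _ (phi H d psi n0) h).
  { apply inS_lim. intros e Hee.
    destruct (Hc h e Hee) as [L EL].
    exists (lincomb psi L). split; [|exact EL].
    clear EL. induction L as [|[c k] L IH].
    - replace (lincomb psi []) with (lincomb (phi H d psi n0) []) by reflexivity.
      apply inS_exact.
    - simpl. apply inS_add; auto. apply inS_scal. eapply psi_inS; [exact HB|]. exact Hb. }
  exact (Hh eps He).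
Qed.
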